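(* Let $\mathbb{V}$ and $\mathbb{V}'$ be varieties with the same signature $\mathcal{F}$ and defining sets of identities $\Sigma\subseteq\Sigma'$ respectively, and suppose $\mathbb{V}$ is BIT speciale. Let $A'$ be a $\mathbb{V}'$-algebra. A subset $H\subseteq A'$ is an ideal of $A'$ in the variety $\mathbb{V}'$ if and only if it is an ideal of $A'$ in the variety $\mathbb{V}$.
   Context: BIT speciale: the algebraic theory of $\mathbb{V}$ contains a constant $0$ and, for some $n\ge1$, binary terms $\alpha_1,\dots,\alpha_n$ and an $(n+1)$-ary term $\theta$ such that $\alpha_i(x,x)=0$ and $\theta(\alpha_1(x,y),\dots,\alpha_n(x,y),y)=x$ are identities of $\mathbb{V}$. For a variety $\mathbb{W}$ with signature $\mathcal{F}$: an ideal term of $\mathbb{W}$ in the variables $y_1,\dots,y_p$ is a term $t(x_1,\dots,x_m,y_1,\dots,y_p)$ over $\mathcal{F}$ such that $t(x_1,\dots,x_m,0,\dots,0)=0$ is an identity of $\mathbb{W}$; a non-empty subset $H$ of a $\mathbb{W}$-algebra $A$ is an ideal of $A$ in $\mathbb{W}$ if $t(a_1,\dots,a_m,b_1,\dots,b_p)\in H$ for every ideal term $t$ of $\mathbb{W}$, all $a_r\in A$ and all $b_s\in H$. A $\mathbb{V}'$-algebra is in particular a $\mathbb{V}$-algebra. *)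

(* Defs.v *)
From mathcomp Require Import all_boot.
Set Implicit Arguments. Unset Strict Implicit. Unset Printing Implicit Defensive.

Record signature := Signature { sym : Type; arity : sym -> nat }.

Inductive term (F : signature) (X : Type) : Type :=
  | Var : X -> term F X
  | App : forall f : sym F, ('I_(arity f) -> term F X) -> term F X.
Arguments Var {F X} x.
Arguments App {F X} f args.

Record algebra (F : signature) := Algebra {
  carrier :> Type;
  ops : forall f : sym F, ('I_(arity f) -> carrier) -> carrier }.

Fixpoint eval (F : signature) (A : algebra F) (X : Type) (v : X -> A)
  (t : term F X) : A :=
  match t with
  | Var x => v x
  | App f args => @ops F A f (fun i => eval v (args i))
  end.

Fixpoint tsubst (F : signature) (X Y : Type) (s : X -> term F Y)
  (t : term F X) : term F Y :=
  match t with
  | Var x => s x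
  | App f args => App f (fun i => tsubst s (args i))
  end.

Definition identities (F : signature) := term F nat -> term F nat -> Prop.

Definition models (F : signature) (A : algebra F) (Sigma : identities F) :=
  forall s t, Sigma s t -> forall v : nat -> A, eval v s = eval v t.

Definition identity_of (F : signature) (Sigma : identities F) (X : Type)
  (s t : term F X) :=
  forall A : algebra F, models A Sigma -> forall v : X -> A, eval v s = eval v t.

(* A constant of the algebraic theory: a term in no variables. *)
Definition const_term (F : signature) := term F Empty_set.
Definition embed (F : signature) (X : Type) (z : const_term F) : term F X :=
  tsubst (fun e : Empty_set => match e with end) z.

(* BIT speciale data for the variety defined by Sigma:
   constant 0 = z, binary terms alpha_i (variables x = ord0, y = ord_max of 'I_2),
   (n+1)-ary term theta (variables Some i for i < n, and None for the last one). *)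
Definition BIT_speciale (F : signature) (Sigma : identities F)
  (z : const_term F) (n : nat) (alpha : 'I_n -> term F 'I_2)
  (theta : term F (option 'I_n)) :=
  [/\ (1 <= n)%N,
      (forall i, identity_of Sigma
          (tsubst (fun _ => Var tt) (alpha i)) (embed unit z)) &
      identity_of Sigma
        (tsubst (fun o => match o with
                          | Some i => alpha i
                          | None => Var (ord_max : 'I_2)
                          end) theta)
        (Var (ord0 : 'I_2))].

(* Ideal terms of the variety defined by Sigma (w.r.t. the constant z),
   in variables x_1..x_m (inl) and y_1..y_p (inr):
   t(x_1,...,x_m,0,...,0) = 0 is an identity. *)
Definition ideal_term (F : signature) (Sigma : identities F) (z : const_term F)
  (m p : nat) (t : term F ('I_m + 'I_p)) :=
  identity_of Sigma
    (tsubst (fun v => match v with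
                      | inl i => Var i
                      | inr _ => embed 'I_m z
                      end) t)
    (embed 'I_m z).

Definition is_ideal (F : signature) (Sigma : identities F) (z : const_term F)
  (A : algebra F) (H : A -> Prop) :=
  (exists h, H h) /\
  forall (m p : nat) (t : term F ('I_m + 'I_p)), ideal_term Sigma z t ->
    forall (a : 'I_m -> A) (b : 'I_p -> A), (forall s, H (b s)) ->
      H (eval (fun v => match v with inl i => a i | inr s => b s end) t).
Arguments is_ideal {F} Sigma z A H.
Arguments ideal_term {F} Sigma z {m p} t.
Arguments BIT_speciale {F} Sigma z {n} alpha theta.
Arguments models {F} A Sigma.
Arguments identity_of {F} Sigma {X} s t.

(* Main.v *)
Require Import Defs.
From mathcomp Require Import all_boot.
From Stdlib Require Import FunctionalExtensionality.
Set Implicit Arguments.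

Lemma eval_tsubst (F : signature) (A : algebra F) (X Y : Type) (v : Y -> A)
  (s : X -> term F Y) (t : term F X) :
  eval v (tsubst s t) = eval (fun x => eval v (s x)) t.
Proof.
induction t as [x|f args IH]; simpl; first by [].
f_equal; apply functional_extensionality => i; apply IH.
Qed.

Definition zeroA (F : signature) (z : const_term F) (A : algebra F) : A :=
  eval (fun e : Empty_set => match e with end) z.

Lemma eval_embed (F : signature) (z : const_term F) (A : algebra F) (X : Type)
  (v : X -> A) : eval v (embed X z) = zeroA z A.
Proof.
rewrite /embed eval_tsubst /zeroA; f_equal.
by apply functional_extensionality => -[].
Qed.

Lemma models_sub (F : signature) (Sigma Sigma' : identities F)
  (Hsub : forall s t, Sigma s t -> Sigma' s t) (A : algebra F) :
  models A Sigma' -> models A Sigma.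
Proof. by move=> HA s t Hst; apply: HA; apply: Hsub. Qed.

Lemma alpha_zero (F : signature) (Sigma : identities F) (z : const_term F)
  (n : nat) (alpha : 'I_n -> term F 'I_2) (theta : term F (option 'I_n))
  (HBIT : BIT_speciale Sigma z alpha theta) (A : algebra F)
  (HA : models A Sigma) (c : A) i :
  eval (fun _ => c) (alpha i) = zeroA z A.
Proof.
case: HBIT => _ H1 _.
have := H1 i A HA (fun _ => c).
by rewrite eval_tsubst eval_embed.
Qed.

Unset Implicit Arguments.

Theorem corollary2p8 (F : signature) (Sigma Sigma' : identities F)
  (Hsub : forall s t, Sigma s t -> Sigma' s t)
  (z : const_term F) (n : nat) (alpha : 'I_n -> term F 'I_2)
  (theta : term F (option 'I_n))
  (HBIT : BIT_speciale Sigma z alpha theta)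
  (A' : algebra F) (HA' : models A' Sigma') (H : A' -> Prop) :
  is_ideal Sigma' z A' H <-> is_ideal Sigma z A' H.
Proof.
have HA : models A' Sigma by move=> s t Hst; apply: HA'; apply: Hsub.
split.
- move=> [hex Hcl]; split; first by [].
  move=> m p t Ht a b Hb; apply: Hcl => //.
  move=> B HB v; apply: Ht => s0 t1 Hst; apply: HB; by apply: Hsub.
- move=> [hex Hcl]; split; first by [].
  move=> m p t Ht a b Hb.
  set va := (fun v => match v with inl i => a i | inr s => b s end).
  set s0 := (fun v : 'I_m + 'I_p => match v with
                      | inl i => Var i
                      | inr _ => embed 'I_m z
                      end).
  set t0 := tsubst s0 t.
  have Ht0 : eval a t0 = zeroA z A'.
    by rewrite (Ht A' HA' a) eval_embed.
  set t0' := tsubst (fun i : 'I_m => Var (@inl 'I_m 'I_p i)) t0.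
  set u := fun i : 'I_n => tsubst (fun k : 'I_2 => if nat_of_ord k == 0%N then t else t0') (alpha i).
  set ut := fun k : 'I_2 => if nat_of_ord k == 0%N then eval va t else zeroA z A'.
  have Hu : forall i, H (eval va (u i)).
    move=> i; apply: Hcl => //.
    move=> B HB w; rewrite eval_embed.
    rewrite -(alpha_zero HBIT HB (eval w t0) i) /u !eval_tsubst; f_equal.
    apply functional_extensionality => k.
    case: ifP => _; rewrite ?eval_tsubst /t0 ?eval_tsubst //.
  have Hue : forall i, eval va (u i) = eval ut (alpha i).
    move=> i; rewrite eval_tsubst; f_equal.
    apply functional_extensionality => k; rewrite /ut.
    case: ifP => _ //.
    by rewrite /t0' eval_tsubst /= -Ht0 /t0 !eval_tsubst.
  set v := tsubst (fun o : option 'I_n => match o with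
                     | Some i => Var (@inr 'I_0 'I_n i)
                     | None => embed ('I_0 + 'I_n) z end) theta.
  have Hv : ideal_term Sigma z v.
    move=> B HB w; rewrite eval_embed !eval_tsubst.
    have [_ _ H2] := HBIT.
    have := H2 B HB (fun _ => zeroA z B).
    rewrite eval_tsubst /= => <-; f_equal.
    apply functional_extensionality => -[i|] /=.
    + by rewrite eval_embed (alpha_zero HBIT HB).
    + by rewrite eval_embed.
  case: hex => h0 _.
  have := Hcl 0%N n v Hv (fun _ => h0) (fun i => eval va (u i)) Hu.
  suff -> : eval (fun w => match w with inl i => h0 | inr s => eval va (u s) end) v = eval va t by [].
  have [_ _ H2] := HBIT.
  have := H2 A' HA ut; rewrite /ut /= => <-.
  rewrite !eval_tsubst; f_equal.
  apply functional_extensionality => -[i|] /=.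
  + by rewrite Hue.
  + by rewrite eval_embed.
Qed.
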